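(* Let $d\ge1$. Let $M$ be a random symmetric $d\times d$ matrix whose entries $M_{a,b}$, $a\ge b$, are independent and uniform on $\{-1,+1\}$. Let $j$ be independent of $M$ and uniform on $\{\lceil d/2\rceil,\dots,d\}$. Let $S=f(M)$, where $f$ is any deterministic function taking values in bit strings of length at most $d^2/128$. Let $\hat M_j=g(S,j)\in\mathbb R^d$ for an arbitrary deterministic function $g$. Then $$\mathbb E_{M,j}\Big[\big\|[\hat M_j-M_j]\big\|^2\Big]\ge\frac d8,$$ where $M_j$ denotes the $j$-th column of $M$.
   Context: For a scalar $w$, $[w]=\min\{1,\max\{-1,w\}\}$ denotes clipping to $[-1,1]$. For a vector $\mathbf w=(w_1,\dots,w_d)$, $[\mathbf w]=([w_1],\dots,[w_d])$. *)

(* Defs.v *)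
From HB Require Import structures.
From mathcomp Require Import all_boot all_order all_algebra.
Set Implicit Arguments. Unset Strict Implicit. Unset Printing Implicit Defensive.
Import Order.TTheory GRing.Theory Num.Theory.
Local Open Scope ring_scope.

(* clipping [w] = min 1 (max (-1) w) *)
Definition clip (R : realFieldType) (w : R) : R := Num.min 1 (Num.max (-1) w).

(* Uniform choice of a symmetric pattern = independent uniform signs for a >= b. *)
Definition sym_pattern (d : nat) : {set {ffun 'I_d * 'I_d -> bool}} :=
  [set x : {ffun 'I_d * 'I_d -> bool} | [forall a, forall b, x (a, b) == x (b, a)]].

Definition sign_mx (R : realFieldType) (d : nat) (x : {ffun 'I_d * 'I_d -> bool})
  : 'M[R]_d := \matrix_(a, b) (if x (a, b) then 1 else -1).

(* admissible column indices: 0-based i with ceil(d/2) <= i+1 <= d *)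
Definition col_range (d : nat) : {set 'I_d} := [set i : 'I_d | uphalf d <= i.+1]%N.

Definition exp_err (R : realFieldType) (d : nat)
  (f : 'M[R]_d -> seq bool) (g : seq bool -> 'I_d -> 'cV[R]_d) : R :=
  (#|sym_pattern d|%:R)^-1 * (#|col_range d|%:R)^-1 *
  \sum_(x in sym_pattern d) \sum_(j in col_range d)
     \sum_(i < d) (clip (g (f (sign_mx R x)) j i ord0 - sign_mx R x i j)) ^+ 2.

(* Main.v *)
Require Import Defs.
From HB Require Import structures.
From mathcomp Require Import all_boot all_order all_algebra.
From mathcomp Require Import zify ring lra.
Set Implicit Arguments. Unset Strict Implicit. Unset Printing Implicit Defensive.
Import Order.TTheory GRing.Theory Num.Theory.
Local Open Scope ring_scope.

Definition upA (d : nat) : {pred 'I_d * 'I_d} := [pred p : 'I_d * 'I_d | (p.1 <= p.2)%N].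
Arguments upA d : clear implicits.
Definition lo (d : nat) (p : 'I_d * 'I_d) : 'I_d * 'I_d :=
  if (p.1 <= p.2)%N then p else (p.2, p.1).
Lemma lo_in d (p : 'I_d * 'I_d) : lo p \in (upA d).
Proof. rewrite /lo inE; case: ifP => //= /negbT; rewrite -ltnNge; apply: ltnW. Qed.
Definition sortp d (p : 'I_d * 'I_d) : {x in upA d} := exist _ (lo p) (lo_in p).
Definition phi d (y : {ffun {x in upA d} -> bool}) : {ffun 'I_d * 'I_d -> bool} :=
  [ffun p => y (sortp p)].

Lemma phi_val d y (u : {x in upA d}) : phi y (val u) = y u.
Proof.
rewrite /phi ffunE; congr (y _); apply: val_inj => /=.
case: u => [p hp] /=; by rewrite /lo; move: hp; rewrite inE => ->.
Qed.

Lemma phi_inj d : injective (@phi d).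
Proof.
move=> y1 y2 e; apply/ffunP => u; by rewrite -!phi_val e.
Qed.

Lemma lo_sym d (a b : 'I_d) : lo (a, b) = lo (b, a).
Proof.
rewrite /lo /=; case: (leqP a b) => h1; case: (leqP b a) => h2 //.
have e : a = b by apply: val_inj; apply/eqP; rewrite eqn_leq h1 h2.
by rewrite e.
exfalso; move: (ltn_trans h1 h2); by rewrite ltnn.
Qed.

Lemma sym_phi d : sym_pattern d = [set phi y | y in setT].
Proof.
apply/setP => x; rewrite /sym_pattern inE; apply/idP/idP.
- move/forallP => hx; apply/imsetP; exists [ffun u => x (val u)] => //.
  apply/ffunP => -[a b]; rewrite /phi !ffunE /= /lo /=.
  case: ifP => // _; by have := hx b; move/forallP/(_ a)/eqP => ->.
- case/imsetP => y _ ->; apply/forallP => a; apply/forallP => b.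
  by rewrite /phi !ffunE /sortp; apply/eqP; congr (y _); apply: val_inj => /=; rewrite lo_sym.
Qed.

Lemma sum_sym (R : realFieldType) d (F : {ffun 'I_d * 'I_d -> bool} -> R) :
  \sum_(x in sym_pattern d) F x = \sum_(y : {ffun {x in upA d} -> bool}) F (phi y).
Proof.
rewrite sym_phi big_imset /=; last by move=> y1 y2 _ _; apply: phi_inj.
by apply: eq_bigl => y; rewrite inE.
Qed.

Lemma sum_prod_sym (R : realFieldType) d (P : pred ('I_d * 'I_d))
  (w : 'I_d * 'I_d -> bool -> R) :
  \sum_(x in sym_pattern d) \prod_(p in upA d | P p) w p (x p) =
  \prod_(u : {x in upA d}) (if P (val u) then w (val u) true + w (val u) false else 2).
Proof.
rewrite sum_sym.
pose G := fun (u : {x in upA d}) (c : bool) => if P (val u) then w (val u) c else 1.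
transitivity (\sum_(y : {ffun {x in upA d} -> bool}) \prod_(u : {x in upA d}) G u (y u)).
  apply: eq_bigr => y _; rewrite big_sub_cond big_mkcond /=.
  by apply: eq_bigr => u _; rewrite phi_val.
transitivity (\prod_(u : {x in upA d}) \sum_(c : bool) G u c).
  by rewrite bigA_distr_bigA.
apply: eq_bigr => u _; rewrite big_bool /G /=.
by case: (P (val u)).
Qed.



Definition Hm d (P : pred ('I_d * 'I_d)) (b : 'I_d * 'I_d -> bool)
  (x : {ffun 'I_d * 'I_d -> bool}) : nat :=
  (\sum_(p in upA d | P p) (x p != b p))%N.

Definition mU d (P : pred ('I_d * 'I_d)) : nat :=
  #|[pred u : {x in upA d} | P (val u)]|.

Lemma card_sym (R : realFieldType) d :
  (#|sym_pattern d|%:R : R) = \prod_(u : {x in upA d}) 2.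
Proof.
have E : \sum_(x in sym_pattern d) \prod_(p in upA d | (fun _ => true) p) (fun (_ : 'I_d * 'I_d) (_ : bool) => (1 : R)) p (x p)
    = #|sym_pattern d|%:R.
  by rewrite sumr_const big1.
rewrite -E (sum_prod_sym (fun _ => true) (fun (_ : 'I_d * 'I_d) (_ : bool) => (1 : R))); apply: eq_bigr => u _ /=; done.
Qed.

Lemma sum_half (R : realFieldType) d (P : pred ('I_d * 'I_d)) b :
  \sum_(x in sym_pattern d) ((2 : R)^-1) ^+ (Hm P b x) =
  #|sym_pattern d|%:R * (3 / 4) ^+ (mU P).
Proof.
under eq_bigr => x _ do rewrite /Hm expr_sum.
rewrite (sum_prod_sym P (fun p c => ((2:R)^-1) ^+ (c != b p))) card_sym.
rewrite (eq_bigr (fun u : {x in upA d} => 2 * (if P (val u) then 3/4 else 1))); last first.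
  move=> u _; case: (P (val u)); last by rewrite mulr1.
  by case: (b (val u)) => /=; rewrite ?expr0 ?expr1; field.
rewrite big_split /=; congr (_ * _).
rewrite -big_mkcond /= prodr_const /mU; congr (_ ^+ _).
Qed.



Lemma clip_ge (R : realFieldType) (w : R) (c : bool) :
  ((c != (0 <= w)%R : bool) : nat)%:R <= (clip (w - (if c then 1 else -1))) ^+ 2.
Proof.
rewrite /clip; case: c; case: (lerP 0 w) => hw /=; rewrite ?sqr_ge0 //.
- have -> : Num.max (-1) (w - 1) = -1 by apply/max_idPl; lra.
  have -> : Num.min 1 (-1) = (-1 : R) by apply/min_idPr; lra.
  by rewrite sqrrN expr1n.
- have -> : Num.max (-1) (w - -1) = w - -1 by apply/max_idPr; lra.
  have -> : Num.min 1 (w - -1) = (1 : R) by apply/min_idPl; lra.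
  by rewrite expr1n.
Qed.

Definition Pcol d : pred ('I_d * 'I_d) := fun p => (uphalf d <= p.2.+1)%N.
Definition bb (R : realFieldType) d (g : seq bool -> 'I_d -> 'cV[R]_d) (s : seq bool)
  : 'I_d * 'I_d -> bool := fun p => (0 <= g s p.2 p.1 ord0)%R.

Lemma err_ge (R : realFieldType) d (g : seq bool -> 'I_d -> 'cV[R]_d) s
  (x : {ffun 'I_d * 'I_d -> bool}) :
  ((Hm (@Pcol d) (bb g s) x)%:R : R) <=
  \sum_(j in col_range d) \sum_(i < d) (clip (g s j i ord0 - sign_mx R x i j)) ^+ 2.
Proof.
rewrite /Hm natr_sum big_mkcond /=.
pose F := fun i j => if ((i, j) \in upA d) && Pcol (i, j)
   then ((x (i, j) != bb g s (i, j) : bool) : nat)%:R else (0:R).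
rewrite (eq_bigr (fun p => F p.1 p.2)); last by case.
rewrite -(pair_bigA _ F) /= exchange_big /=.
rewrite [in X in _ <= X]big_mkcond /=.
apply: ler_sum => j _; rewrite inE.
case hj: (uphalf d <= j.+1)%N.
- apply: ler_sum => i _; rewrite /F /Pcol /= hj andbT.
  case: ifP => _; last by rewrite sqr_ge0.
  by rewrite /bb /sign_mx mxE; apply: clip_ge.
- by rewrite big1 // => i _; rewrite /F /Pcol /= hj andbF.
Qed.



Lemma sum_geh n h : (\sum_(i < n) (h <= i.+1 : nat))%N = (n - (h - 1))%N.
Proof.
elim: n => [|n IH]; first by rewrite big_ord0.
rewrite big_ord_recr /= IH; case: (leqP h n.+1) => /= H; lia.
Qed.

Lemma card_col d : #|col_range d| = (d - (uphalf d - 1))%N.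
Proof.
rewrite -sum1_card big_mkcond /= -sum_geh; apply: eq_bigr => i _.
by rewrite /col_range inE; case: ifP.
Qed.

Lemma sum_le n b : (\sum_(i < n) (i <= b : nat))%N = minn n b.+1.
Proof.
elim: n => [|n IH]; first by rewrite big_ord0 min0n.
rewrite big_ord_recr /= IH; case: (leqP n b) => /= H; lia.
Qed.

Lemma sum_tri n h : (n * n.+1 <= 2 * \sum_(j < n) (h <= j.+1 : nat) * j.+1 + (h - 1) * h)%N.
Proof.
elim: n => [|n IH]; first by [].
rewrite big_ord_recr /=; move: IH; set S := (\sum_(_ < n) _)%N => IH.
case: (leqP h n.+1) => /= H.
  rewrite mul1n; nia.
rewrite mul0n addn0.
have : (n.+1 * n.+2 <= (h - 1) * h)%N by apply: leq_mul; lia.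
lia.
Qed.

Lemma mU_eq d : mU (@Pcol d) = (\sum_(j < d) (uphalf d <= j.+1 : nat) * j.+1)%N.
Proof.
rewrite /mU -sum1_card.
have -> : (\sum_(u in [pred u : {x in upA d} | Pcol (val u)]) 1 =
   \sum_(u : {x in upA d} | Pcol (val u)) 1)%N by apply: eq_bigl.
rewrite -(big_sub_cond (upA d) (@Pcol d) (fun _ => 1%N)) big_mkcond /=.
pose F := fun i j : 'I_d => if ((i, j) \in upA d) && Pcol (i, j) then 1%N else 0%N.
rewrite (eq_bigr (fun p => F p.1 p.2)); last by case.
rewrite -(pair_bigA _ F) /= exchange_big /=; apply: eq_bigr => j _.
rewrite /F /Pcol /=; case: (uphalf d <= j.+1)%N => /=.
- rewrite mul1n (eq_bigr (fun i : 'I_d => (i <= j : nat))); last by move=> i _; rewrite andbT inE; case: ifP.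
  rewrite sum_le; have := ltn_ord j; lia.
- by rewrite big1 // => i _; rewrite andbF.
Qed.



Fixpoint Ls (L : nat) : seq (seq bool) :=
  match L with
  | 0 => [:: [::]]
  | L'.+1 => Ls L' ++ [seq tval t | t <- enum {: L'.+1 .-tuple bool}]
  end.

Lemma Ls_mem L s : (size s <= L)%N -> s \in Ls L.
Proof.
elim: L => [|L IH] /=.
  by rewrite leqn0 => /nilP ->.
rewrite leq_eqVlt mem_cat => /orP[/eqP hs|hs]; last by rewrite IH.
apply/orP; right; apply/mapP.
have hs' : size s == L.+1 by apply/eqP.
by exists (Tuple hs'); rewrite ?mem_enum.
Qed.

Lemma Ls_size L : (size (Ls L) < 2 ^ L.+1)%N.
Proof.
elim: L => [|L IH] //=.
rewrite size_cat size_map -cardE card_tuple card_bool.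
rewrite !expnS; rewrite expnS in IH; lia.
Qed.

Lemma chord_nat T H : ((T + 2) * 2 ^ H <= H * 2 ^ H + 2 ^ T.+1)%N.
Proof.
case: (leqP (T + 2) H) => h1.
  by apply: leq_trans (leq_addr _ _); apply: leq_mul.
case: (leqP H T) => h2; last first.
  have -> : H = T.+1 by lia.
  rewrite expnS; lia.
have [t ->] : exists t, T = (H + t)%N by exists (T - H)%N; lia.
have := ltn_expl t.+1 (isT : (1 < 2)%N).
move=> ht.
have -> : (2 ^ (H + t).+1 = 2 ^ t.+1 * 2 ^ H)%N by rewrite -expnD addnC addSn.
have : ((t + 2) * 2 ^ H <= 2 ^ t.+1 * 2 ^ H)%N by apply: leq_mul => //; lia.
nia.
Qed.

Lemma chord (R : realFieldType) (T H : nat) :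
  (T + 2)%:R <= (H%:R : R) + 2 ^+ T.+1 * (2^-1) ^+ H.
Proof.
have := chord_nat T H; rewrite -(ler_nat R) natrD !natrM !natrX natrD.
have hp : (0 : R) < 2 ^+ H by apply: exprn_gt0.
move=> hn; rewrite exprVn -(ler_pM2r hp) [in X in _ <= X]mulrDl -mulrA mulVf ?mulr1;
  last by rewrite gt_eqF.
by move: hn; rewrite mulrDl.
Qed.

Lemma sum_const_seq (R : realFieldType) (T : Type) (s : seq T) (c : R) :
  \sum_(t <- s) c = (size s)%:R * c.
Proof.
elim: s => [|a s IH]; first by rewrite big_nil mul0r.
by rewrite big_cons IH /= -[(size s).+1]addn1 natrD; ring.
Qed.

Lemma le_sum_mem (R : realFieldType) (T : eqType) (s : seq T) (F : T -> R) a :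
  (forall t, 0 <= F t) -> a \in s -> F a <= \sum_(t <- s) F t.
Proof.
move=> F0 ha; rewrite (big_rem _ ha) /=.
by rewrite lerDl sumr_ge0.
Qed.



Lemma nat_big d nJ m L h : (6 <= d)%N -> (h * 2 <= d + 1)%N -> (d <= h*2)%N ->
  (128 * L <= d * d)%N -> (nJ + h <= d + 1)%N ->
  (d * (d + 1) <= 2 * m + (h - 1) * h)%N -> ((nJ*d+7)%/8 + L + 1 <= 2*(m %/ 5))%N.
Proof.
move=> *.
have : (nJ * d <= (d + 1 - h) * d)%N by apply: leq_mul => //; lia.
nia.
Qed.

Lemma pow34 q r : (3 ^ (q * 5 + r) * 4 ^ q <= 4 ^ (q * 5 + r))%N.
Proof.
elim: q => [|q IH].
  rewrite /= muln1 mul0n add0n; elim: r => [|r IHr] //; rewrite !expnS; lia.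
have e1 : (3 ^ (q.+1 * 5 + r) = 243 * 3 ^ (q * 5 + r))%N.
  by rewrite mulSn -addnA expnD.
have e2 : (4 ^ (q.+1 * 5 + r) = 1024 * 4 ^ (q * 5 + r))%N.
  by rewrite mulSn -addnA expnD.
rewrite e1 e2 expnS; nia.
Qed.

Lemma uphalf_facts d : (uphalf d * 2 <= d + 1)%N /\ (d <= uphalf d * 2)%N.
Proof.
rewrite uphalf_half; have := odd_double_half d; rewrite -muln2.
case: (odd d) => /=; lia.
Qed.

Lemma numeric (R : realFieldType) d nJ m N : (1 <= d)%N ->
  (N < 2 ^ (d ^ 2 %/ 128).+1)%N -> ((d <= 5)%N -> N = 1%N) ->
  (nJ + uphalf d <= d + 1)%N -> (d * (d + 1) <= 2 * m + (uphalf d - 1) * uphalf d)%N ->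
  exists T : nat, (nJ * d)%:R / 8 <= (T + 2)%:R - 2 ^+ T.+1 * N%:R * (3/4 : R) ^+ m.
Proof.
move=> hd hN hN1 hJ hm.
have [h1 h2] := uphalf_facts d.
case: (leqP d 5) => hd5.
  exists 0%N; rewrite (hN1 hd5) add0n mulr1 expr1.
  have hq : forall m0, (m0 <= m)%N -> (3/4 : R) ^+ m <= (3/4) ^+ m0.
    by move=> m0 hm0; apply: ler_wiXn2l => //; lra.
  have hJ' : forall J0, (nJ <= J0)%N -> (nJ%:R : R) <= J0%:R by move=> J0; rewrite ler_nat.
  rewrite natrM.
  move: hJ hm h1 h2; case: d hd hd5 {hN hN1} => [|[|[|[|[|[|d]]]]]] // _ _ /= hJ hm h1 h2.
  - have := hq 1%N ltac:(lia); have := hJ' 1%N ltac:(lia); rewrite !exprS expr0; lra.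
  - have := hq 3%N ltac:(lia); have := hJ' 2%N ltac:(lia); rewrite !exprS expr0; lra.
  - have := hq 5%N ltac:(lia); have := hJ' 2%N ltac:(lia); rewrite !exprS expr0; lra.
  - have := hq 9%N ltac:(lia); have := hJ' 3%N ltac:(lia); rewrite !exprS expr0; lra.
  - have := hq 12%N ltac:(lia); have := hJ' 3%N ltac:(lia); rewrite !exprS expr0; lra.
set L := (d ^ 2 %/ 128)%N.
set T := ((nJ * d + 7) %/ 8)%N.
set q := (m %/ 5)%N.
have hL : (128 * L <= d * d)%N by rewrite /L mulnC -leq_divRL // -expnS.
have hTq : (T + L + 1 <= 2 * q)%N by apply: (nat_big (h := uphalf d)).
have h34 : (3 ^ m * 4 ^ q <= 4 ^ m)%N by rewrite {1 2}(divn_eq m 5); apply: pow34.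
have hnat : (2 ^ T.+1 * N * 3 ^ m <= 2 * 4 ^ m)%N.
  have hN' : (N <= 2 ^ L.+1)%N by apply: ltnW.
  have e : (2 ^ T.+1 * 2 ^ L.+1 <= 2 * 4 ^ q)%N.
    have -> : (2 * 4 ^ q = 2 ^ (2 * q).+1)%N by rewrite expnS expnM.
    rewrite -expnD leq_exp2l //; lia.
  apply: (leq_trans (n := (2 * 4 ^ q * 3 ^ m)%N)).
    apply: leq_mul => //; apply: (leq_trans _ e); by apply: leq_mul.
  nia.
have hT8 : (nJ * d <= 8 * T)%N by rewrite /T; lia.
exists T.
have h4 : (0 : R) < 4 ^+ m by apply: exprn_gt0.
have hr : 2 ^+ T.+1 * N%:R * (3/4 : R) ^+ m <= 2.
  rewrite expr_div_n mulrA ler_pdivrMr //.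
  by move: hnat; rewrite -(ler_nat R) !natrM !natrX.
have : (nJ * d)%:R <= (8 * T)%:R :> R by rewrite ler_nat.
rewrite natrM natrD; lra.
Qed.



Unset Implicit Arguments.
Theorem mainTheorem12 (R : realFieldType) (d : nat) (hd : (1 <= d)%N)
  (f : 'M[R]_d -> seq bool) (g : seq bool -> 'I_d -> 'cV[R]_d)
  (hf : forall M : 'M[R]_d, (size (f M) * 128 <= d ^ 2)%N) :
  exp_err f g >= d%:R / 8.
Proof.
set X := sym_pattern d.
set L := (d ^ 2 %/ 128)%N.
set N := size (Ls L).
set m := mU (@Pcol d).
set nJ := #|col_range d|.
set E := fun x : {ffun 'I_d * 'I_d -> bool} => \sum_(j in col_range d) \sum_(i < d)
     (clip (g (f (sign_mx R x)) j i ord0 - sign_mx R x i j)) ^+ 2.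
set Hx := fun x => Hm (@Pcol d) (bb g (f (sign_mx R x))) x.
have key : forall T : nat,
  #|X|%:R * ((T + 2)%:R - 2 ^+ T.+1 * N%:R * (3/4 : R) ^+ m) <= \sum_(x in X) E x.
  move=> T.
  apply: (le_trans _ (_ : \sum_(x in X) (Hx x)%:R <= _)); last first.
    by apply: ler_sum => x _; apply: err_ge.
  have hsum : \sum_(x in X) ((2:R)^-1) ^+ (Hx x) <= N%:R * (#|X|%:R * (3/4) ^+ m).
    apply: (le_trans (_ : _ <= \sum_(x in X) \sum_(t <- Ls L)
        ((2:R)^-1) ^+ (Hm (@Pcol d) (bb g t) x))).
      apply: ler_sum => x _; rewrite /Hx.
      apply: (@le_sum_mem R _ _ (fun t => ((2:R)^-1) ^+ (Hm (@Pcol d) (bb g t) x)) (f (sign_mx R x))).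
        by move=> t; apply: exprn_ge0; rewrite invr_ge0.
      by apply: Ls_mem; rewrite leq_divRL //; apply: hf.
    rewrite exchange_big /= (eq_bigr (fun _ => #|X|%:R * (3/4 : R) ^+ m)).
      by rewrite sum_const_seq.
    by move=> t _; apply: sum_half.
  have hch : \sum_(x in X) ((T + 2)%:R : R) <=
      \sum_(x in X) ((Hx x)%:R + 2 ^+ T.+1 * ((2:R)^-1) ^+ (Hx x)).
    by apply: ler_sum => x _; apply: chord.
  rewrite big_split /= -big_distrr /= sumr_const in hch.
  have h2 : (0 : R) <= 2 ^+ T.+1 by apply: exprn_ge0.
  have := ler_wpM2l h2 hsum.
  move: hch; rewrite -[(T + 2)%:R *+ #|X|]mulr_natr.
  lra.
have [h1 h2] := uphalf_facts d.
have hcol : nJ = (d - (uphalf d - 1))%N by rewrite /nJ card_col.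
have hJ : (nJ + uphalf d <= d + 1)%N by rewrite hcol; lia.
have hm : (d * (d + 1) <= 2 * m + (uphalf d - 1) * uphalf d)%N.
  by rewrite /m mU_eq addn1; apply: sum_tri.
have hN1 : (d <= 5)%N -> N = 1%N.
  move=> h5; rewrite /N /L.
  have -> : (d ^ 2 %/ 128 = 0)%N by apply: divn_small; rewrite expnS expn1; nia.
  by [].
have [T hT] := numeric R hd (Ls_size L) hN1 hJ hm.
have nX0 : (0:R) < #|X|%:R by rewrite /X card_sym prodr_const exprn_gt0.
have nJ0 : (0 < nJ)%N by rewrite hcol; lia.
have nJ0' : (0:R) < nJ%:R by rewrite ltr0n.
have H1 : #|X|%:R * ((nJ * d)%:R / 8) <= \sum_(x in X) E x.
  apply: (le_trans _ (key T)); apply: ler_wpM2l; [exact: ltW | exact: hT].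
rewrite /exp_err -/X -/nJ -mulrA ler_pdivlMl // ler_pdivlMl //.
apply: (le_trans _ H1); rewrite natrM le_eqVlt; apply/orP; left; apply/eqP; ring.
Qed.
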